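(* Let $L\geq 2$ and work in the setting below. Suppose $\sigma\in C^2(\mathbb{R})$ with $|\sigma(z)|\leq M_0$, $|\sigma'(z)|\leq M_1$, $|\sigma''(z)|\leq M_2$ for all $z\in\mathbb{R}$, for some $M_0,M_1,M_2>0$. Let $R>0$ and assume that the parameters $\{W_l\}_{l=1}^L$ and $\{b_l,c_l\}_{l=1}^{L-1}$ (those held fixed in each statement below) all have Frobenius norm at most $R$. Then there exist constants $C_1,\dots,C_L>0$ such that: (i) for each $l=1,\dots,L-1$, regarding $S$ as a function of $c_l$ alone with all other parameters fixed, $$\|\nabla_{c_l}S(\hat c_l)-\nabla_{c_l}S(\tilde c_l)\|_{\mathrm F}\leq C_l\|\hat c_l-\tilde c_l\|_{\mathrm F}\quad\text{for all }\hat c_l,\tilde c_l\in\mathbb{R}^{M\times N};$$ (ii) regarding $S$ as a function of $W_L$ alone with all other parameters fixed, $$\|\nabla_{W_L}S(\hat W_L)-\nabla_{W_L}S(\tilde W_L)\|_{\mathrm F}\leq C_L\|\hat W_L-\tilde W_L\|_{\mathrm F}$$ for all $\hat W_L,\tilde W_L\in\mathbb{R}^{J\times M}$ with $\|\hat W_L\|_{\mathrm F},\|\tilde W_L\|_{\mathrm F}\leq R$.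
   Context: Data: $X\in\mathbb{R}^{d\times N}$, $A\in\mathbb{R}^{J\times N}$ with one-hot columns (entries in $\{0,1\}$, each column summing to $1$), $J\geq 2$. For $\boldsymbol z\in\mathbb{R}^J$ and one-hot $\boldsymbol\alpha$, $\ell(\boldsymbol z,\boldsymbol\alpha)=-\sum_j\alpha_j\ln\big(e^{z_j}/\sum_k e^{z_k}\big)$; for $Z=[\boldsymbol z_1\cdots\boldsymbol z_N]$, $\mathcal{L}_{\mathrm{vec}}(Z,A)=[\ell(\boldsymbol z_n,\boldsymbol\alpha_n)]_{n=1}^N\in\mathbb{R}^N$. Parameters: $W_1\in\mathbb{R}^{M\times d}$, $W_2,\dots,W_{L-1}\in\mathbb{R}^{M\times M}$, $W_L\in\mathbb{R}^{J\times M}$, $b_l\in\mathbb{R}^M$, $c_l\in\mathbb{R}^{M\times N}$ ($l\le L-1$); $\sigma$ acts entrywise; $\mathbf 1\in\mathbb{R}^N$ is the all-ones vector. Weights $\omega_l=\prod_{j=l+1}^L\|W_j\|_{\mathrm F}^2$, and $$S=\|\mathcal{L}_{\mathrm{vec}}(W_L\sigma(c_{L-1}),A)\|_2^2+\sum_{l=2}^{L-1}\omega_l\|W_l\sigma(c_{l-1})+b_l\mathbf 1^\top-c_l\|_{\mathrm F}^2+\omega_1\|W_1X+b_1\mathbf 1^\top-c_1\|_{\mathrm F}^2.$$ $\nabla_{c_l}S$ and $\nabla_{W_L}S$ denote the partial gradients of $S$ (with respect to the Frobenius inner product). *)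

(* Defs.v *)
From HB Require Import structures.
From mathcomp Require Import all_boot all_order all_algebra.
From mathcomp Require Import all_classical all_reals all_analysis.
Set Implicit Arguments. Unset Strict Implicit. Unset Printing Implicit Defensive.
Import Order.TTheory GRing.Theory Num.Theory.
Local Open Scope ring_scope.

Section Defs.
Variable R : realType.

Definition frob2 (m n : nat) (A : 'M[R]_(m, n)) : R :=
  \sum_(i < m) \sum_(j < n) (A i j) ^+ 2.
Definition frob (m n : nat) (A : 'M[R]_(m, n)) : R := Num.sqrt (frob2 A).

(* gradient w.r.t. the Frobenius inner product: matrix of partial derivatives *)
Definition mgrad (m n : nat) (f : 'M[R]_(m, n) -> R) (x : 'M[R]_(m, n))
  : 'M[R]_(m, n) :=
  \matrix_(i < m, j < n) derive1 (fun t : R => f (x + t *: delta_mx i j)) 0.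

Definition act (sigma : R -> R) (m n : nat) (A : 'M[R]_(m, n)) : 'M[R]_(m, n) :=
  map_mx sigma A.

Definition bcast (m N : nat) (b : 'cV[R]_m) : 'M[R]_(m, N) :=
  \matrix_(i < m, k < N) b i 0.

Definition xent (J : nat) (z alpha : 'cV[R]_J) : R :=
  - \sum_(j < J) alpha j 0 * ln (expR (z j 0) / \sum_(k < J) expR (z k 0)).

Definition Lvec_sq (J N : nat) (Z A : 'M[R]_(J, N)) : R :=
  \sum_(n < N) (xent (col n Z) (col n A)) ^+ 2.

Definition onehot_cols (J N : nat) (A : 'M[R]_(J, N)) : Prop :=
  (forall j n, A j n = 0 \/ A j n = 1) /\ (forall n, \sum_(j < J) A j n = 1).

(* Weights: W_1 : M x d, W_l (2 <= l <= L-1) : M x M given by Wm l, W_L : J x M.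
   Squared Frobenius norm of W_l (indexed by l). *)
Definition Wn2 (L d M J : nat) (W1 : 'M[R]_(M, d)) (Wm : nat -> 'M[R]_(M, M))
  (WL : 'M[R]_(J, M)) (l : nat) : R :=
  if l == 1%N then frob2 W1 else if l == L then frob2 WL else frob2 (Wm l).

Definition omega (L d M J : nat) (W1 : 'M[R]_(M, d)) (Wm : nat -> 'M[R]_(M, M))
  (WL : 'M[R]_(J, M)) (l : nat) : R :=
  \prod_(l.+1 <= j < L.+1) Wn2 L W1 Wm WL j.

(* The objective S; b l and c l are used for 1 <= l <= L-1 *)
Definition Sobj (sigma : R -> R) (L d M J N : nat)
  (X : 'M[R]_(d, N)) (A : 'M[R]_(J, N))
  (W1 : 'M[R]_(M, d)) (Wm : nat -> 'M[R]_(M, M)) (WL : 'M[R]_(J, M))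
  (b : nat -> 'cV[R]_M) (c : nat -> 'M[R]_(M, N)) : R :=
  Lvec_sq (WL *m act sigma (c L.-1)) A
  + \sum_(2 <= l < L) omega L W1 Wm WL l *
        frob2 (Wm l *m act sigma (c l.-1) + bcast N (b l) - c l)
  + omega L W1 Wm WL 1 * frob2 (W1 *m X + bcast N (b 1%N) - c 1%N).

Definition upd (T : Type) (c : nat -> T) (l : nat) (x : T) : nat -> T :=
  fun k => if k == l then x else c k.

End Defs.

(* Main.v *)
Require Import Defs.
From HB Require Import structures.
From mathcomp Require Import all_boot all_order all_algebra.
From mathcomp Require Import all_classical all_reals all_analysis.
From mathcomp Require Import ring lra zify.
Import Order.TTheory GRing.Theory Num.Theory numFieldNormedType.Exports.
Local Open Scope ring_scope.
Set Implicit Arguments. Unset Strict Implicit.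


Section Basic.
Variable R : realType.

Lemma frob2_ge0 m n (A : 'M[R]_(m,n)) : 0 <= frob2 A.
Proof. by apply: sumr_ge0 => i _; apply: sumr_ge0 => j _; apply: sqr_ge0. Qed.

Lemma frob_ge0 m n (A : 'M[R]_(m,n)) : 0 <= frob A.
Proof. exact: sqrtr_ge0. Qed.

Lemma frob2E m n (A : 'M[R]_(m,n)) : frob2 A = frob A ^+ 2.
Proof. by rewrite /frob sqr_sqrtr // frob2_ge0. Qed.

Lemma entry_le_frob m n (A : 'M[R]_(m,n)) i j : `|A i j| <= frob A.
Proof.
rewrite -sqrtr_sqr /frob ler_sqrt ?frob2_ge0 //.
rewrite /frob2 (bigD1 i) //= (bigD1 j) //= -addrA lerDl.
apply: addr_ge0; first by apply: sumr_ge0 => k _; apply: sqr_ge0.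
by apply: sumr_ge0 => k _; apply: sumr_ge0 => k' _; apply: sqr_ge0.
Qed.

Lemma frob_le_entries m n (A : 'M[R]_(m,n)) c :
  0 <= c -> (forall i j, `|A i j| <= c) -> frob A <= (m * n)%:R * c.
Proof.
move=> c0 H.
have h1 : frob2 A <= ((m * n)%:R * c) ^+ 2.
  apply: (@le_trans _ _ (\sum_(i < m) \sum_(j < n) c ^+ 2)).
    apply: ler_sum => i _; apply: ler_sum => j _.
    by rewrite -real_normK ?num_real // [X in _ <= X]expr2 ler_pM ?normr_ge0.
  rewrite !sumr_const !card_ord -mulrnA exprMn -[c ^+ 2 *+ _]mulr_natl mulnC.
  apply: ler_wpM2r; first exact: sqr_ge0.
  rewrite expr2 -natrM ler_nat; case: (m * n)%N => // k.
  by rewrite mulSn leq_addr.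
rewrite -[X in _ <= X]ger0_norm ?mulr_ge0 ?ler0n // -sqrtr_sqr /frob ler_sqrt //.
exact: sqr_ge0.
Qed.

Lemma lip_core (f df : R -> R) (K a b : R) : a <= b ->
  (forall x, a <= x <= b -> is_derive x 1 f (df x)) ->
  (forall x, a <= x <= b -> `|df x| <= K) ->
  `|f b - f a| <= K * `|b - a|.
Proof.
move=> ab hd hb.
have [c cab ->] : exists2 c, c \in `[a, b]%R & f b - f a = df c * (b - a).
  apply: MVT_segment => //.
    by move=> x; rewrite in_itv /= => /andP[/ltW h1 /ltW h2]; apply: hd; rewrite h1 h2.
  apply: derivable_within_continuous => x; rewrite in_itv /= => hx.
  by have := hd x hx => -[].
rewrite normrM ler_wpM2r //; apply: hb.
by move: cab; rewrite in_itv.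
Qed.

Lemma lip_deriv (f df : R -> R) (S : R -> Prop) (K : R) :
  (forall a b x, S a -> S b -> a <= x <= b -> S x) ->
  (forall x, S x -> is_derive x 1 f (df x)) ->
  (forall x, S x -> `|df x| <= K) ->
  forall a b, S a -> S b -> `|f a - f b| <= K * `|a - b|.
Proof.
move=> conv hd hb a b Sa Sb.
have [ab|ba] := leP a b.
  rewrite distrC [`|a - b|]distrC; apply: lip_core ab _ _ => x hx.
    by apply: hd; exact: (conv a b).
  by apply: hb; exact: (conv a b).
apply: lip_core (ltW ba) _ _ => x hx.
  by apply: hd; exact: (conv b a).
by apply: hb; exact: (conv b a).
Qed.

Lemma is_derive_comp1 (f g : R -> R) (x df : R) :
  is_derive x 1 f df -> derivable g (f x) 1 ->
  is_derive x 1 (g \o f) (derive1 g (f x) * df).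
Proof.
move=> hf hg; have df1 : derivable f x 1 by case: hf.
apply: DeriveDef.
  apply/derivable1_diffP; apply: differentiable_comp.
    exact/derivable1_diffP.
  exact/derivable1_diffP.
rewrite -derive1E derive1_comp // derive1E; congr (_ * _).
rewrite derive1E; exact: derive_val.
Qed.

End Basic.


Lemma unif (R : realType) (T : finType) (Q : T -> R -> Prop) :
  (forall t K K', K <= K' -> Q t K -> Q t K') ->
  (forall t, exists K, Q t K) -> exists K, forall t, Q t K.
Proof.
move=> mono /choice [f hf]; exists (\sum_t `|f t|) => t.
apply: (mono t (f t)) => //; apply: le_trans (ler_norm _) _.
rewrite (bigD1 t) //= lerDl; apply: sumr_ge0 => *; exact: normr_ge0.
Qed.

Section Nice.
Variable R : realType.
Variables (m n : nat) (P : Type) (good : P -> Prop) (Dom : 'M[R]_(m,n) -> Prop).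
Local Notation V := 'M[R]_(m,n).
Local Notation Fam := (P -> V -> R).

Definition Bnd (F : Fam) := exists B, forall p x, good p -> Dom x -> `|F p x| <= B.
Definition Lip (F : Fam) := exists K, forall p x y, good p -> Dom x -> Dom y ->
  `|F p x - F p y| <= K * frob (x - y).
Definition HasD (F : Fam) (D : 'I_m -> 'I_n -> Fam) := forall p x i j, good p -> Dom x ->
  is_derive (0:R) (1:R) (fun t : R => F p (x + t *: delta_mx i j)) (D i j p x).
Definition nice F := exists D, HasD F D /\ Lip F /\ (forall i j, Bnd (D i j) /\ Lip (D i j)).
Definition bnice F := nice F /\ Bnd F.
Definition gl F := exists D, HasD F D /\ (forall i j, Lip (D i j)).

Lemma Bnd_ge0 F : Bnd F -> exists B, 0 <= B /\ forall p x, good p -> Dom x -> `|F p x| <= B.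
Proof.
move=> [B hB]; exists (`|B|); split => // p x gp dx.
exact: le_trans (hB p x gp dx) (ler_norm _).
Qed.

Lemma Lip_ge0 F : Lip F -> exists K, 0 <= K /\ forall p x y, good p -> Dom x -> Dom y ->
  `|F p x - F p y| <= K * frob (x - y).
Proof.
move=> [K hK]; exists (`|K|); split => // p x y gp dx dy.
apply: le_trans (hK p x y gp dx dy) _; apply: ler_wpM2r; [exact: frob_ge0|exact: ler_norm].
Qed.

Lemma Bnd_cst (a : P -> R) B : (forall p, good p -> `|a p| <= B) -> Bnd (fun p _ => a p).
Proof. by move=> h; exists B => p x gp _; apply: h. Qed.

Lemma Lip_cst (a : P -> R) : Lip (fun p _ => a p).
Proof. by exists 0 => p x y *; rewrite subrr normr0 mul0r. Qed.

Lemma BndD F G : Bnd F -> Bnd G -> Bnd (fun p x => F p x + G p x).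
Proof.
move=> [B1 h1] [B2 h2]; exists (B1 + B2) => p x gp dx.
by apply: le_trans (ler_normD _ _) _; apply: lerD; [apply: h1|apply: h2].
Qed.

Lemma BndM F G : Bnd F -> Bnd G -> Bnd (fun p x => F p x * G p x).
Proof.
move=> /Bnd_ge0 [B1 [b1 h1]] /Bnd_ge0 [B2 [b2 h2]]; exists (B1 * B2) => p x gp dx.
by rewrite normrM; apply: ler_pM => //; [apply: h1|apply: h2].
Qed.

Lemma LipD F G : Lip F -> Lip G -> Lip (fun p x => F p x + G p x).
Proof.
move=> [K1 h1] [K2 h2]; exists (K1 + K2) => p x y gp dx dy.
have -> : F p x + G p x - (F p y + G p y) = (F p x - F p y) + (G p x - G p y) by ring.
rewrite mulrDl.
by apply: le_trans (ler_normD _ _) _; apply: lerD; [apply: h1|apply: h2].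
Qed.

Lemma LipM F G : Bnd F -> Bnd G -> Lip F -> Lip G -> Lip (fun p x => F p x * G p x).
Proof.
move=> /Bnd_ge0 [B1 [b1 h1]] /Bnd_ge0 [B2 [b2 h2]] /Lip_ge0 [K1 [k1 l1]] /Lip_ge0 [K2 [k2 l2]].
exists (B1 * K2 + B2 * K1) => p x y gp dx dy.
have -> : F p x * G p x - F p y * G p y =
  F p x * (G p x - G p y) + G p y * (F p x - F p y) by ring.
rewrite mulrDl; apply: le_trans (ler_normD _ _) _; rewrite !normrM -!mulrA.
apply: lerD; apply: ler_pM => //; try exact: normr_ge0.
- exact: h1.
- exact: l2.
- exact: h2.
- exact: l1.
Qed.

Lemma HasD_cst (a : P -> R) : HasD (fun p _ => a p) (fun _ _ _ _ => 0).
Proof. by move=> p x i j _ _; exact: is_derive_cst. Qed.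

Lemma HasD_coord k l : HasD (fun _ x => x k l) (fun i j _ _ => delta_mx i j k l).
Proof.
move=> p x i j _ _.
have -> : (fun t : R => (x + t *: delta_mx i j) k l) =
  (cst (x k l) + (delta_mx i j k l) *: (@id R)).
  by apply/funext => t /=; rewrite !mxE mulrC.
apply: is_derive_eq.
by rewrite add0r [_ *: _]mulr1.
Qed.

Lemma HasD_add F G DF DG : HasD F DF -> HasD G DG ->
  HasD (fun p x => F p x + G p x) (fun i j p x => DF i j p x + DG i j p x).
Proof.
move=> hF hG p x i j gp dx.
exact: (is_deriveD (hF p x i j gp dx) (hG p x i j gp dx)).
Qed.

Lemma HasD_mul F G DF DG : HasD F DF -> HasD G DG ->
  HasD (fun p x => F p x * G p x) (fun i j p x => F p x * DG i j p x + G p x * DF i j p x).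
Proof.
move=> hF hG p x i j gp dx.
have h := is_deriveM (hF p x i j gp dx) (hG p x i j gp dx).
move: h; rewrite /= scale0r addr0 => h; exact: h.
Qed.

Lemma HasD_comp (phi phi' : R -> R) (S : R -> Prop) F D :
  (forall a, S a -> is_derive a 1 phi (phi' a)) ->
  (forall p x, good p -> Dom x -> S (F p x)) ->
  HasD F D -> HasD (fun p x => phi (F p x)) (fun i j p x => phi' (F p x) * D i j p x).
Proof.
move=> hphi hS hF p x i j gp dx.
have hd := hphi _ (hS p x gp dx).
have h := @is_derive_comp1 R (fun t => F p (x + t *: delta_mx i j)) phi 0 _ (hF p x i j gp dx).
move: h; rewrite /= scale0r addr0 => h.
have -> : phi' (F p x) = derive1 phi (F p x).
  by rewrite derive1E; case: hd => _ ->.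
apply: h; by case: hd.
Qed.

Lemma HasD_ext F G D : (forall p x, good p -> F p x = G p x) -> HasD F D -> HasD G D.
Proof.
move=> e hF p x i j gp dx.
have -> : (fun t : R => G p (x + t *: delta_mx i j)) = (fun t => F p (x + t *: delta_mx i j)).
  by apply/funext => t; rewrite e.
exact: hF.
Qed.

Lemma Bnd_ext F G : (forall p x, good p -> F p x = G p x) -> Bnd F -> Bnd G.
Proof. by move=> e [B h]; exists B => p x gp dx; rewrite -e //; apply: h. Qed.

Lemma Lip_ext F G : (forall p x, good p -> F p x = G p x) -> Lip F -> Lip G.
Proof. by move=> e [B h]; exists B => p x y gp dx dy; rewrite -!e //; apply: h. Qed.

Lemma nice_ext F G : (forall p x, good p -> F p x = G p x) -> nice F -> nice G.
Proof.
move=> e [D [hD [hL hDD]]]; exists D; split; first exact: HasD_ext hD.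
by split => //; apply: Lip_ext hL.
Qed.

Lemma bnice_ext F G : (forall p x, good p -> F p x = G p x) -> bnice F -> bnice G.
Proof. by move=> e [h1 h2]; split; [apply: nice_ext h1|apply: Bnd_ext h2]. Qed.

Lemma gl_ext F G : (forall p x, good p -> F p x = G p x) -> gl F -> gl G.
Proof. by move=> e [D [hD hL]]; exists D; split => //; apply: HasD_ext hD. Qed.

Lemma nice_cst (a : P -> R) : nice (fun p _ => a p).
Proof.
exists (fun _ _ _ _ => 0); split; first exact: HasD_cst.
split; first exact: Lip_cst.
move=> i j; split; [by exists 0 => *; rewrite normr0|exact: (Lip_cst (fun _ => 0))].
Qed.

Lemma bnice_cst (a : P -> R) B : (forall p, good p -> `|a p| <= B) -> bnice (fun p _ => a p).
Proof. by move=> h; split; [exact: nice_cst|exact: Bnd_cst h]. Qed.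

Lemma nice_coord k l : nice (fun _ x => x k l).
Proof.
exists (fun i j _ _ => delta_mx i j k l); split; first exact: HasD_coord.
split.
  exists 1 => p x y _ _ _; rewrite mul1r.
  have -> : x k l - y k l = (x - y) k l by rewrite !mxE.
  exact: entry_le_frob.
move=> i j; split; first by exists 1 => p x _ _; rewrite /delta_mx mxE; case: (_ && _); rewrite ?normr1 ?normr0.
exact: (Lip_cst (fun _ => _)).
Qed.

Lemma bnice_coord k l B : (forall x, Dom x -> frob x <= B) -> bnice (fun _ x => x k l).
Proof.
move=> h; split; first exact: nice_coord.
by exists B => p x _ dx; apply: le_trans (h x dx); apply: entry_le_frob.
Qed.

Lemma niceD F G : nice F -> nice G -> nice (fun p x => F p x + G p x).
Proof.
move=> [DF [hF [lF bF]]] [DG [hG [lG bG]]].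
exists (fun i j p x => DF i j p x + DG i j p x); split; first exact: HasD_add.
split; first exact: LipD.
move=> i j; have [b1 l1] := bF i j; have [b2 l2] := bG i j.
by split; [apply: BndD|apply: LipD].
Qed.

Lemma bniceD F G : bnice F -> bnice G -> bnice (fun p x => F p x + G p x).
Proof. by move=> [h1 h2] [h3 h4]; split; [apply: niceD|apply: BndD]. Qed.

Lemma bniceM F G : bnice F -> bnice G -> bnice (fun p x => F p x * G p x).
Proof.
move=> [[DF [hF [lF bF]]] BF] [[DG [hG [lG bG]]] BG].
split; last exact: BndM.
exists (fun i j p x => F p x * DG i j p x + G p x * DF i j p x); split; first exact: HasD_mul.
split; first exact: LipM.
move=> i j; have [b1 l1] := bF i j; have [b2 l2] := bG i j.
split; first by apply: BndD; apply: BndM.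
by apply: LipD; apply: LipM.
Qed.

Lemma bniceN F : bnice F -> bnice (fun p x => - F p x).
Proof.
move=> h; apply: (@bnice_ext (fun p x => (fun _ _ => -1) p x * F p x)).
  by move=> p x _; rewrite mulN1r.
apply: bniceM h; apply: (@bnice_cst (fun _ => -1) 1).
by move=> *; rewrite normrN normr1.
Qed.

Lemma bniceB F G : bnice F -> bnice G -> bnice (fun p x => F p x - G p x).
Proof. by move=> h1 h2; exact: (bniceD h1 (bniceN h2)). Qed.

Lemma nice_comp (phi phi' : R -> R) (S : R -> Prop) F L0 L1 L2 :
  0 <= L0 -> 0 <= L1 -> 0 <= L2 ->
  (forall a, S a -> is_derive a 1 phi (phi' a)) ->
  (forall a b, S a -> S b -> `|phi a - phi b| <= L0 * `|a - b|) ->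
  (forall a, S a -> `|phi' a| <= L1) ->
  (forall a b, S a -> S b -> `|phi' a - phi' b| <= L2 * `|a - b|) ->
  (forall p x, good p -> Dom x -> S (F p x)) ->
  nice F -> nice (fun p x => phi (F p x)).
Proof.
move=> l0 l1 l2 hd hL0 hL1 hL2 hS [D [hD [lF bD]]].
exists (fun i j p x => phi' (F p x) * D i j p x); split; first exact: HasD_comp hS hD.
have [K [k0 hK]] := Lip_ge0 lF.
split.
  exists (L0 * K) => p x y gp dx dy.
  apply: le_trans (hL0 _ _ (hS _ _ gp dx) (hS _ _ gp dy)) _.
  by rewrite -mulrA ler_wpM2l //; apply: hK.
move=> i j; have [/Bnd_ge0 [B [b0 hB]] /Lip_ge0 [KD [kd hKD]]] := bD i j.
split.
  exists (L1 * B) => p x gp dx; rewrite normrM.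
  by apply: ler_pM; [exact: normr_ge0|exact: normr_ge0|apply: hL1; apply: hS|apply: hB].
exists (L1 * KD + L2 * K * B) => p x y gp dx dy.
have Sx := hS _ _ gp dx; have Sy := hS _ _ gp dy.
have -> : phi' (F p x) * D i j p x - phi' (F p y) * D i j p y =
  phi' (F p x) * (D i j p x - D i j p y) + (phi' (F p x) - phi' (F p y)) * D i j p y by ring.
apply: le_trans (ler_normD _ _) _; rewrite [X in _ <= X]mulrDl !normrM.
apply: lerD.
  rewrite -mulrA; apply: ler_pM => //; try exact: normr_ge0; [exact: hL1|exact: hKD].
apply: (@le_trans _ _ ((L2 * `|F p x - F p y|) * B)).
  apply: ler_pM => //; try exact: normr_ge0; [exact: hL2|exact: hB].
rewrite (_ : L2 * K * B * frob (x - y) = L2 * (K * frob (x - y)) * B); last by ring.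
by apply: ler_wpM2r => //; apply: ler_wpM2l => //; exact: hK.
Qed.

Lemma Bnd_comp (phi : R -> R) (S : R -> Prop) F L3 :
  (forall a, S a -> `|phi a| <= L3) ->
  (forall p x, good p -> Dom x -> S (F p x)) -> Bnd (fun p x => phi (F p x)).
Proof. by move=> h hS; exists L3 => p x gp dx; apply: h; apply: hS. Qed.

Lemma bnice_sum (I : eqType) (r : seq I) (F : I -> Fam) :
  (forall k, k \in r -> bnice (F k)) -> bnice (fun p x => \sum_(k <- r) F k p x).
Proof.
elim: r => [|k r ih] h.
  by apply: bnice_ext (@bnice_cst (fun _ => 0) 0 _) => *; rewrite ?big_nil ?normr0.
apply: bnice_ext (bniceD (h k _) (ih _)).
- by move=> p x _; rewrite big_cons.
- by rewrite mem_head.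
- by move=> k' hk'; apply: h; rewrite in_cons hk' orbT.
Qed.

Lemma bnice_prod (I : eqType) (r : seq I) (F : I -> Fam) :
  (forall k, k \in r -> bnice (F k)) -> bnice (fun p x => \prod_(k <- r) F k p x).
Proof.
elim: r => [|k r ih] h.
  by apply: bnice_ext (@bnice_cst (fun _ => 1) 1 _) => *; rewrite ?big_nil ?normr1.
apply: bnice_ext (bniceM (h k _) (ih _)).
- by move=> p x _; rewrite big_cons.
- by rewrite mem_head.
- by move=> k' hk'; apply: h; rewrite in_cons hk' orbT.
Qed.

Lemma nice_gl F : nice F -> gl F.
Proof. by move=> [D [hD [_ h]]]; exists D; split => // i j; case: (h i j). Qed.

Lemma glD F G : gl F -> gl G -> gl (fun p x => F p x + G p x).
Proof.
move=> [DF [hF lF]] [DG [hG lG]].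
exists (fun i j p x => DF i j p x + DG i j p x); split; first exact: HasD_add.
by move=> i j; apply: LipD.
Qed.

Lemma gl_cst (a : P -> R) : gl (fun p _ => a p).
Proof. exact/nice_gl/nice_cst. Qed.

Lemma HasD_extD F D1 D2 : (forall i j p x, good p -> Dom x -> D1 i j p x = D2 i j p x) ->
  HasD F D1 -> HasD F D2.
Proof. by move=> e h p x i j gp dx; rewrite -e //; apply: h. Qed.

Lemma gl_scale (w : P -> R) F B : (forall p, good p -> `|w p| <= B) -> gl F ->
  gl (fun p x => w p * F p x).
Proof.
move=> hw [D [hD lD]].
exists (fun i j p x => w p * D i j p x); split.
  apply: HasD_extD (HasD_mul (HasD_cst w) hD).
  by move=> i j p x _ _; rewrite mulr0 addr0.
move=> i j; have [K [k0 hK]] := Lip_ge0 (lD i j).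
exists (`|B| * K) => p x y gp dx dy.
rewrite -mulrBr normrM -mulrA; apply: ler_pM; rewrite ?normr_ge0 //.
  exact: le_trans (hw p gp) (ler_norm _).
exact: hK.
Qed.

Lemma gl_sq_aff (a : P -> R) k l : gl (fun p x => (a p - x k l) ^+ 2).
Proof.
have hA : HasD (fun p x => a p + (-1) * x k l) (fun i j p x => 0 + ((-1) * delta_mx i j k l + x k l * 0)).
  apply: HasD_add; first exact: HasD_cst.
  exact: (HasD_mul (HasD_cst (fun _ => -1)) (HasD_coord k l)).
have hA' : HasD (fun p x => a p - x k l) (fun i j p x => - delta_mx i j k l).
  apply: (@HasD_ext (fun p x => a p + (-1) * x k l)).
    by move=> p x _; rewrite mulN1r.
  apply: HasD_extD hA.
  by move=> i j p x _ _; rewrite mulr0 addr0 add0r mulN1r.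
exists (fun i j p x => (a p - x k l) * (- delta_mx i j k l) + (a p - x k l) * (- delta_mx i j k l)).
split.
  apply: HasD_ext (HasD_mul hA' hA').
  by move=> p x _; rewrite expr2.
move=> i j; exists 2 => p x y gp dx dy.
have -> : (a p - x k l) * - delta_mx i j k l + (a p - x k l) * - delta_mx i j k l -
   ((a p - y k l) * - delta_mx i j k l + (a p - y k l) * - delta_mx i j k l) =
   2 * ((x - y) k l * delta_mx i j k l) by rewrite !mxE; ring.
rewrite normrM ger0_norm // ler_wpM2l // normrM.
apply: le_trans _ (entry_le_frob (x - y) k l).
rewrite -[X in _ <= X]mulr1; apply: ler_wpM2l; first exact: normr_ge0.
by rewrite /delta_mx mxE; case: (_ && _); rewrite ?normr1 ?normr0.
Qed.

Lemma gl_sum (I : eqType) (r : seq I) (F : I -> Fam) :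
  (forall k, k \in r -> gl (F k)) -> gl (fun p x => \sum_(k <- r) F k p x).
Proof.
elim: r => [|k r ih] h.
  by apply: gl_ext (gl_cst (fun _ => 0)) => *; rewrite big_nil.
apply: gl_ext (glD (h k _) (ih _)).
- by move=> p x _; rewrite big_cons.
- by rewrite mem_head.
- by move=> k' hk'; apply: h; rewrite in_cons hk' orbT.
Qed.

Lemma gl_mgrad F : gl F -> exists C, 0 < C /\ forall p x y, good p -> Dom x -> Dom y ->
  frob (mgrad (F p) x - mgrad (F p) y) <= C * frob (x - y).
Proof.
move=> [D [hD lD]].
have [K hK] : exists K, forall ij : 'I_m * 'I_n, forall p x y, good p -> Dom x -> Dom y ->
    `|D ij.1 ij.2 p x - D ij.1 ij.2 p y| <= K * frob (x - y).
  apply: unif.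
    move=> ij K1 K2 k12 h p x y gp dx dy; apply: le_trans (h p x y gp dx dy) _.
    by apply: ler_wpM2r => //; exact: frob_ge0.
  by move=> [i j]; exact: lD.
have hK0 : 0 <= (m * n)%:R * `|K| by rewrite mulr_ge0.
exists ((m * n)%:R * `|K| + 1); split; first by lra.
move=> p x y gp dx dy.
have eq z : Dom z -> mgrad (F p) z = \matrix_(i, j) D i j p z.
  move=> dz; apply/matrixP => i j; rewrite !mxE derive1E.
  by have := hD p z i j gp dz; case => _ ->.
rewrite (eq x dx) (eq y dy).
apply: le_trans (frob_le_entries (c := `|K| * frob (x - y)) _ _) _.
- by rewrite mulr_ge0 // frob_ge0.
- move=> i j; rewrite !mxE; apply: le_trans (hK (i, j) p x y gp dx dy) _.
  by apply: ler_wpM2r; [exact: frob_ge0|exact: ler_norm].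
by rewrite mulrA mulrDl mul1r lerDl frob_ge0.
Qed.

End Nice.


Section Funs.
Variable R : realType.
Variables (m n : nat) (P : Type) (good : P -> Prop) (Dom : 'M[R]_(m,n) -> Prop).
Local Notation Fam := (P -> 'M[R]_(m,n) -> R).

Lemma bnice_sigma (sigma : R -> R) (M0 M1 M2 : R) (F : Fam) :
  (forall x, derivable sigma x 1) ->
  (forall x, derivable (derive1 sigma) x 1) ->
  (forall x, `|sigma x| <= M0) ->
  (forall x, `|derive1 sigma x| <= M1) ->
  (forall x, `|derive1n 2 sigma x| <= M2) ->
  nice good Dom F -> bnice good Dom (fun p x => sigma (F p x)).
Proof.
move=> d1 d2 b0 b1 b2 hF.
have hd1 (a : R) : is_derive a (1:R) sigma (derive1 sigma a).
  by rewrite derive1E; apply: derivableP.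
have hd2 (a : R) : is_derive a (1:R) (derive1 sigma) (derive1n 2 sigma a).
  by rewrite /= derive1E; apply: derivableP.
have m1 : 0 <= M1 by apply: le_trans (b1 0); exact: normr_ge0.
have m2 : 0 <= M2 by apply: le_trans (b2 0); exact: normr_ge0.
split; last by exists M0 => *; apply: b0.
apply: (@nice_comp _ _ _ _ good Dom sigma (derive1 sigma) (fun _ => True) F M1 M1 M2) => //.
- by move=> a b _ _; apply: (@lip_deriv _ _ _ (fun _ => True)).
- by move=> a b _ _; apply: (@lip_deriv _ _ _ (fun _ => True)).
Qed.

Lemma bnice_exp (F : Fam) B : (forall p x, good p -> Dom x -> `|F p x| <= B) ->
  nice good Dom F -> bnice good Dom (fun p x => expR (F p x)).
Proof.
move=> hB hF.
pose S := fun a : R => -B <= a <= B.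
have hS p x : good p -> Dom x -> S (F p x) by move=> gp dx; rewrite /S -ler_norml; apply: hB.
have conv a b x : S a -> S b -> a <= x <= b -> S x.
  by rewrite /S => /andP[h1 h2] /andP[h3 h4] /andP[h5 h6]; apply/andP; split; lra.
have bd a : S a -> `|expR a| <= expR B.
  by move=> /andP[_ h]; rewrite ger0_norm ?expR_ge0 // ler_expR.
have e0 : 0 <= expR B by exact: expR_ge0.
split; last exact: (Bnd_comp bd hS).
apply: (@nice_comp _ _ _ _ good Dom expR expR S F (expR B) (expR B) (expR B)) => //.
- by move=> a b Sa Sb; apply: (@lip_deriv _ _ _ S) => // x _; exact: is_derive_expR.
- by move=> a b Sa Sb; apply: (@lip_deriv _ _ _ S) => // x _; exact: is_derive_expR.
Qed.

Lemma bnice_ln (F : Fam) lo hi : 0 < lo ->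
  (forall p x, good p -> Dom x -> lo <= F p x <= hi) ->
  nice good Dom F -> bnice good Dom (fun p x => ln (F p x)).
Proof.
move=> lo0 hB hF.
pose S := fun a : R => lo <= a <= hi.
have conv a b x : S a -> S b -> a <= x <= b -> S x.
  by rewrite /S => /andP[h1 h2] /andP[h3 h4] /andP[h5 h6]; apply/andP; split; lra.
have pos a : S a -> 0 < a by move=> /andP[h _]; lra.
have hd (a : R) : S a -> is_derive a (1:R) (@ln R) a^-1 by move=> /pos; exact: is_derive1_ln.
have bi a : S a -> `|a^-1| <= lo^-1.
  move=> Sa; have a0 := pos a Sa; rewrite ger0_norm; last by rewrite invr_ge0 ltW.
  by rewrite lef_pV2 ?posrE //; case/andP: Sa.
have il0 : 0 <= lo^-1 by rewrite invr_ge0 ltW.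
split.
  apply: (@nice_comp _ _ _ _ good Dom (@ln R) (fun a => a^-1) S F lo^-1 lo^-1 (lo^-1 * lo^-1)) => //.
  - by rewrite mulr_ge0.
  - by move=> a b Sa Sb; apply: (@lip_deriv _ _ _ S).
  - move=> a b Sa Sb.
    have -> : a^-1 - b^-1 = (b - a) * (a^-1 * b^-1).
      by field; apply/andP; split; rewrite gt_eqF ?pos.
    rewrite normrM distrC mulrC normrM; apply: ler_wpM2r; first exact: normr_ge0.
    by apply: ler_pM; rewrite ?normr_ge0 //; apply: bi.
apply: (@Bnd_comp _ _ _ _ good Dom (@ln R) S F (`|ln lo| + `|ln hi|)); last first.
  by move=> p x gp dx; apply: hB.
move=> a Sa; have a0 := pos a Sa.
have hi0 : 0 < hi by case/andP: Sa => _ h; lra.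
have l1 : ln lo <= ln a by rewrite ler_ln ?posrE //; case/andP: Sa.
have l2 : ln a <= ln hi by rewrite ler_ln ?posrE //; case/andP: Sa.
have := ler_norm (ln hi); have := ler_norm (- ln lo); rewrite normrN => h1 h2.
rewrite ler_norml; apply/andP; split.
  have := normr_ge0 (ln hi); lra.
have := normr_ge0 (ln lo); lra.
Qed.

End Funs.


Section Spec.
Variable R : realType.
Variables (m n : nat) (P : Type) (good : P -> Prop) (Dom : 'M[R]_(m,n) -> Prop).
Local Notation Fam := (P -> 'M[R]_(m,n) -> R).
Local Notation bnice := (bnice good Dom).

Lemma frob2_le m' n' (A : 'M[R]_(m', n')) Rad : frob A <= Rad -> `|frob2 A| <= Rad * Rad.
Proof.
move=> h; rewrite ger0_norm ?frob2_ge0 // frob2E expr2.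
by apply: ler_pM => //; apply: frob_ge0.
Qed.

Lemma bnice_xent (J : nat) (z : 'I_J -> Fam) (alpha : 'I_J -> R) : (0 < J)%N ->
  (forall j, bnice (z j)) ->
  bnice (fun p x => - \sum_(j < J) alpha j * ln (expR (z j p x) / \sum_(k < J) expR (z k p x))).
Proof.
move=> J0 hz.
have [B hB] : exists B, forall j p x, good p -> Dom x -> `|z j p x| <= B.
  apply: unif; last by move=> j; case: (hz j) => _ [B hB]; exists B.
  by move=> j K K' kk h p x gp dx; apply: le_trans (h p x gp dx) kk.
have hexp k : bnice (fun p x => expR (z k p x)) by apply: bnice_exp (hB k) (hz k).1.
have sum_pos p x : 0 < \sum_(k < J) expR (z k p x).
  rewrite (bigD1 (Ordinal J0)) //=; apply: ltr_pwDl; first exact: expR_gt0.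
  by apply: sumr_ge0 => *; exact: expR_ge0.
have hln : bnice (fun p x => ln (\sum_(k < J) expR (z k p x))).
  apply: (@bnice_ln _ _ _ _ good Dom _ (J%:R * expR (- B)) (J%:R * expR B)).
  - by rewrite mulr_gt0 ?ltr0n ?expR_gt0.
  - move=> p x gp dx; apply/andP; split.
      apply: (@le_trans _ _ (\sum_(k < J) expR (- B))).
        by rewrite sumr_const card_ord mulr_natl.
      apply: ler_sum => k _; rewrite ler_expR.
      by have := hB k p x gp dx; rewrite ler_norml => /andP[].
    apply: (@le_trans _ _ (\sum_(k < J) expR B)); last first.
      by rewrite sumr_const card_ord mulr_natl.
    apply: ler_sum => k _; rewrite ler_expR.
    by have := hB k p x gp dx; rewrite ler_norml => /andP[].
  - exact: (bnice_sum (r := index_enum 'I_J) (fun k _ => hexp k)).1.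
apply: (@bnice_ext _ _ _ _ good Dom (fun p x => - \sum_(j < J) alpha j * (z j p x - ln (\sum_(k < J) expR (z k p x))))).
  move=> p x _; congr (- _); apply: eq_bigr => j _.
  by rewrite ln_div ?posrE ?expR_gt0 ?sum_pos // expRK.
apply: bniceN; apply: bnice_sum => j _.
apply: bniceM; first exact: (@bnice_cst _ _ _ _ good Dom (fun _ => alpha j) `|alpha j| (fun _ _ => lexx _)).
exact: bniceB (hz j) hln.
Qed.

Lemma bnice_Lvec (J N : nat) (Z : P -> 'M[R]_(m,n) -> 'M[R]_(J,N)) (A : 'M[R]_(J,N)) :
  (0 < J)%N -> (forall j k, bnice (fun p x => Z p x j k)) ->
  bnice (fun p x => Lvec_sq (Z p x) A).
Proof.
move=> J0 hZ.
apply: (@bnice_ext _ _ _ _ good Dom (fun p x => \sum_(k < N)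
  ((- \sum_(j < J) A j k * ln (expR (Z p x j k) / \sum_(i < J) expR (Z p x i k))) *
   (- \sum_(j < J) A j k * ln (expR (Z p x j k) / \sum_(i < J) expR (Z p x i k)))))).
  move=> p x _; rewrite /Lvec_sq; apply: eq_bigr => k _.
  have e1 : \sum_(i < J) expR (col k (Z p x) i 0) = \sum_(i < J) expR (Z p x i k).
    by apply: eq_bigr => i _; rewrite mxE.
  have e2 : \sum_(j < J) col k A j 0 * ln (expR (col k (Z p x) j 0) /
      \sum_(i < J) expR (col k (Z p x) i 0)) =
    \sum_(j < J) A j k * ln (expR (Z p x j k) / \sum_(i < J) expR (Z p x i k)).
    by rewrite e1; apply: eq_bigr => j _; rewrite !mxE.
  by rewrite expr2 /xent e2.
apply: bnice_sum => k _; apply: bniceM; apply: bnice_xent => // j; exact: hZ.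
Qed.

Lemma bnice_Lterm (q r N : nat) (Wf : P -> 'M[R]_(q, r)) (Sg : P -> 'M[R]_(m,n) -> 'M[R]_(r, N))
  (bf : P -> 'cV[R]_q) (Cf : P -> 'M[R]_(q, N)) Rad :
  (forall p, good p -> frob (Wf p) <= Rad) ->
  (forall p, good p -> frob (bf p) <= Rad) ->
  (forall p, good p -> frob (Cf p) <= Rad) ->
  (forall k j, bnice (fun p x => Sg p x k j)) ->
  bnice (fun p x => frob2 (Wf p *m Sg p x + bcast N (bf p) - Cf p)).
Proof.
move=> hW hb hC hS.
apply: (@bnice_ext _ _ _ _ good Dom (fun p x => \sum_(i < q) \sum_(j < N)
  ((\sum_(k < r) Wf p i k * Sg p x k j + bf p i 0 - Cf p i j) *
   (\sum_(k < r) Wf p i k * Sg p x k j + bf p i 0 - Cf p i j)))).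
  move=> p x _; rewrite /frob2; apply: eq_bigr => i _; apply: eq_bigr => j _.
  by rewrite /bcast !mxE expr2.
apply: bnice_sum => i _; apply: bnice_sum => j _.
have hh : bnice (fun p x => \sum_(k < r) Wf p i k * Sg p x k j + bf p i 0 - Cf p i j).
  apply: bniceB; first apply: bniceD.
  - apply: bnice_sum => k _; apply: bniceM (hS k j).
    apply: (@bnice_cst _ _ _ _ good Dom (fun p => Wf p i k) Rad).
    by move=> p gp; apply: le_trans (hW p gp); apply: entry_le_frob.
  - apply: (@bnice_cst _ _ _ _ good Dom (fun p => bf p i 0) Rad).
    by move=> p gp; apply: le_trans (hb p gp); apply: entry_le_frob.
  - apply: (@bnice_cst _ _ _ _ good Dom (fun p => Cf p i j) Rad).
    by move=> p gp; apply: le_trans (hC p gp); apply: entry_le_frob.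
exact: (bniceM hh hh).
Qed.

Lemma bnice_frob2_cst (q r : nat) (Af : P -> 'M[R]_(q, r)) Rad :
  (forall p, good p -> frob (Af p) <= Rad) -> bnice (fun p _ => frob2 (Af p)).
Proof.
by move=> h; apply: (@bnice_cst _ _ _ _ good Dom (fun p => frob2 (Af p)) (Rad * Rad)) => p gp; apply: frob2_le; apply: h.
Qed.

Lemma bnice_omega (L M d J k : nat) (W1f : P -> 'M[R]_(M,d)) (Wmf : P -> nat -> 'M[R]_M)
  (WLf : P -> 'M[R]_(m,n) -> 'M[R]_(J,M)) Rad :
  (1 <= k)%N -> (forall p, good p -> frob (W1f p) <= Rad) ->
  (forall p j, good p -> (2 <= j <= L.-1)%N -> frob (Wmf p j) <= Rad) ->
  bnice (fun p x => frob2 (WLf p x)) ->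
  bnice (fun p x => omega L (W1f p) (Wmf p) (WLf p x) k).
Proof.
move=> k1 h1 hm hL; rewrite /omega.
apply: bnice_prod => j; rewrite mem_index_iota => /andP[j1 j2].
rewrite /Wn2; case: eqP => [_|/eqP jn1]; first exact: bnice_frob2_cst h1.
case: eqP => [_|/eqP jnL]; first exact: hL.
apply: (bnice_frob2_cst (Af := fun p => Wmf p j)) => p gp; apply: hm => //.
by move: jnL; lia.
Qed.

End Spec.


Lemma upd_eq T (c : nat -> T) l x : upd c l x l = x.
Proof. by rewrite /upd eqxx. Qed.

Lemma upd_ne T (c : nat -> T) l x k : k != l -> upd c l x k = c k.
Proof. by rewrite /upd => /negbTE ->. Qed.

Section Main.
Variable R : realType.
Variables (L d M J N : nat) (X : 'M[R]_(d, N)) (A : 'M[R]_(J, N)) (sigma : R -> R) (M0 M1 M2 Rad : R).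
Hypotheses (L2 : (2 <= L)%N) (J2 : (2 <= J)%N)
  (d1 : forall x, derivable sigma x 1)
  (d2 : forall x, derivable (derive1 sigma) x 1)
  (b0 : forall x, `|sigma x| <= M0)
  (b1 : forall x, `|derive1 sigma x| <= M1)
  (b2 : forall x, `|derive1n 2 sigma x| <= M2).

Lemma J0 : (0 < J)%N. Proof. by apply: leq_trans J2. Qed.

Lemma gl_quad m n (P : Type) (good : P -> Prop) (Dom : 'M[R]_(m,n) -> Prop) (Y : P -> 'M[R]_(m,n)) :
  gl good Dom (fun p x => frob2 (Y p - x)).
Proof.
apply: (@gl_ext _ _ _ _ good Dom (fun p x => \sum_(i < m) \sum_(j < n) (Y p i j - x i j) ^+ 2)).
  by move=> p x _; rewrite /frob2; apply: eq_bigr => i _; apply: eq_bigr => j _; rewrite !mxE.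
apply: gl_sum => i _; apply: gl_sum => j _; exact: gl_sq_aff.
Qed.

Record par2 := Par2 { q1 : 'M[R]_(M,d); qm : nat -> 'M[R]_M; qb : nat -> 'cV[R]_M;
  qc : nat -> 'M[R]_(M,N) }.

Definition good2 (p : par2) := frob (q1 p) <= Rad /\
  (forall k, (2 <= k <= L.-1)%N -> frob (qm p k) <= Rad) /\
  (forall k, (1 <= k <= L.-1)%N -> frob (qb p k) <= Rad) /\
  (forall k, (1 <= k <= L.-1)%N -> frob (qc p k) <= Rad).

Definition Dom2 (x : 'M[R]_(J,M)) := frob x <= Rad.

Lemma part2 : bnice good2 Dom2 (fun p x => Sobj sigma L X A (q1 p) (qm p) x (qb p) (qc p)).
Proof.
have hx : bnice good2 Dom2 (fun p x => frob2 x).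
  apply: (@bnice_ext _ _ _ _ good2 Dom2 (fun p x => \sum_(i < J) \sum_(j < M) (x i j * x i j))).
    by move=> p x _; rewrite /frob2; apply: eq_bigr => i _; apply: eq_bigr => j _; rewrite expr2.
  by apply: bnice_sum => i _; apply: bnice_sum => j _; apply: bniceM; exact: (@bnice_coord _ _ _ _ good2 Dom2 i j Rad (fun x h => h)).
have hom k : (1 <= k)%N -> bnice good2 Dom2 (fun p x => omega L (q1 p) (qm p) x k).
  move=> k1; apply: (bnice_omega (WLf := fun p x => x) (Rad := Rad)) => //.
  - by move=> p [].
  - by move=> p j [_ [h _]]; apply: h.
apply: bniceD; first apply: bniceD.
- apply: bnice_Lvec; first exact: J0.
  move=> j k.
  apply: (@bnice_ext _ _ _ _ good2 Dom2 (fun p x => \sum_(i < M) x j i * sigma (qc p L.-1 i k))).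
    by move=> p x _; rewrite !mxE; apply: eq_bigr => i _; rewrite mxE.
  apply: bnice_sum => i _; apply: bniceM; first exact: (@bnice_coord _ _ _ _ good2 Dom2 j i Rad (fun x h => h)).
  exact: (@bnice_cst _ _ _ _ good2 Dom2 (fun p => sigma (qc p L.-1 i k)) M0).
- apply: bnice_sum => l; rewrite mem_index_iota => /andP[l1 l2].
  apply: bniceM; first by apply: hom; lia.
  apply: (bnice_Lterm (Rad := Rad) (Sg := fun p _ => act sigma (qc p l.-1))).
  + by move=> p [_ [h _]]; apply: h; lia.
  + by move=> p [_ [_ [h _]]]; apply: h; lia.
  + by move=> p [_ [_ [_ h]]]; apply: h; lia.
  + move=> k j; apply: (@bnice_cst _ _ _ _ good2 Dom2 (fun p => act sigma (qc p l.-1) k j) M0).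
    by move=> p _; rewrite mxE.
- apply: bniceM; first by apply: hom.
  apply: (bnice_Lterm (Rad := Rad) (Sg := fun p _ => X)).
  + by move=> p [].
  + by move=> p [_ [_ [h _]]]; apply: h; lia.
  + by move=> p [_ [_ [_ h]]]; apply: h; lia.
  + by move=> k j; apply: (@bnice_cst _ _ _ _ good2 Dom2 (fun p => X k j) `|X k j|).
Qed.

Record par1 := Par1 { r1 : 'M[R]_(M,d); rm : nat -> 'M[R]_M; rL : 'M[R]_(J,M);
  rb : nat -> 'cV[R]_M; rc : nat -> 'M[R]_(M,N) }.

Definition good1 (l : nat) (p : par1) := frob (r1 p) <= Rad /\
  (forall k, (2 <= k <= L.-1)%N -> frob (rm p k) <= Rad) /\
  frob (rL p) <= Rad /\
  (forall k, (1 <= k <= L.-1)%N -> frob (rb p k) <= Rad) /\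
  (forall k, (1 <= k <= L.-1)%N -> k != l -> frob (rc p k) <= Rad).

Definition Dom1 (x : 'M[R]_(M,N)) := True.

Lemma part1 l : (1 <= l <= L.-1)%N ->
  gl (good1 l) Dom1 (fun p x => Sobj sigma L X A (r1 p) (rm p) (rL p) (rb p) (upd (rc p) l x)).
Proof.
move=> hl.
have hom k : (1 <= k)%N -> bnice (good1 l) Dom1 (fun p x => omega L (r1 p) (rm p) (rL p) k).
  move=> k1; apply: (bnice_omega (WLf := fun p x => rL p) (Rad := Rad)) => //.
  - by move=> p [].
  - by move=> p j [_ [h _]]; apply: h.
  - by apply: (@bnice_frob2_cst _ _ _ _ (good1 l) Dom1 _ _ rL Rad) => p [_ [_ [h _]]].
have homB k : (1 <= k)%N -> exists B, forall p, good1 l p ->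
    `|omega L (r1 p) (rm p) (rL p) k| <= B.
  move=> /hom [_ [B hB]]; exists B => p gp; exact: (hB p 0 gp I).
have sig i j : bnice (good1 l) Dom1 (fun p x => sigma (x i j)).
  exact: (bnice_sigma d1 d2 b0 b1 b2 (nice_coord (good1 l) Dom1 i j)).
apply: glD; first apply: glD.
- case: (eqVneq L.-1 l) => hL.
    apply/nice_gl; apply: (@nice_ext _ _ _ _ (good1 l) Dom1 (fun p x => Lvec_sq (rL p *m act sigma x) A)).
      by move=> p x _; rewrite -hL upd_eq.
    suff hh : bnice (good1 l) Dom1 (fun p x => Lvec_sq (rL p *m act sigma x) A) by case: hh.
    apply: bnice_Lvec; first exact: J0.
    move=> j k.
    apply: (@bnice_ext _ _ _ _ (good1 l) Dom1 (fun p x => \sum_(i < M) rL p j i * sigma (x i k))).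
      by move=> p x _; rewrite !mxE; apply: eq_bigr => i _; rewrite mxE.
    apply: bnice_sum => i _; apply: bniceM (sig i k).
    apply: (@bnice_cst _ _ _ _ (good1 l) Dom1 (fun p => rL p j i) Rad).
    by move=> p [_ [_ [h _]]]; apply: le_trans h; apply: entry_le_frob.
  apply: (@gl_ext _ _ _ _ (good1 l) Dom1 (fun p x => Lvec_sq (rL p *m act sigma (rc p L.-1)) A)).
    by move=> p x _; rewrite upd_ne.
  exact: gl_cst.
- apply: gl_sum => k; rewrite mem_index_iota => /andP[k1 k2].
  case: (eqVneq k l) => hk.
    have [B hB] := homB k (ltnW k1).
    apply: (gl_scale hB).
    apply: (@gl_ext _ _ _ _ (good1 l) Dom1
      (fun p x => frob2 ((rm p k *m act sigma (rc p k.-1) + bcast N (rb p k)) - x))).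
      by move=> p x _; rewrite upd_ne ?hk ?upd_eq //; apply/eqP; lia.
    exact: gl_quad.
  case: (eqVneq k.-1 l) => hk'.
    apply/nice_gl.
    suff hh : bnice (good1 l) Dom1 (fun p x => omega L (r1 p) (rm p) (rL p) k *
      frob2 (rm p k *m act sigma (upd (rc p) l x k.-1) + bcast N (rb p k) - upd (rc p) l x k)) by case: hh.
    apply: (bniceM (hom k (ltnW k1))).
    apply: (@bnice_ext _ _ _ _ (good1 l) Dom1
      (fun p x => frob2 (rm p k *m act sigma x + bcast N (rb p k) - rc p k))).
      by move=> p x _; rewrite [upd _ _ _ k]upd_ne // -hk' upd_eq.
    apply: (bnice_Lterm (Rad := Rad) (Sg := fun p x => act sigma x)).
    + by move=> p [_ [h _]]; apply: h; lia.
    + by move=> p [_ [_ [_ [h _]]]]; apply: h; lia.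
    + by move=> p [_ [_ [_ [_ h]]]]; apply: h => //; lia.
    + move=> i j; apply: (@bnice_ext _ _ _ _ (good1 l) Dom1 (fun p x => sigma (x i j))) => //.
      by move=> p x _; rewrite mxE.
  apply: (@gl_ext _ _ _ _ (good1 l) Dom1 (fun p x => omega L (r1 p) (rm p) (rL p) k *
      frob2 (rm p k *m act sigma (rc p k.-1) + bcast N (rb p k) - rc p k))).
    by move=> p x _; rewrite !upd_ne.
  exact: (gl_cst (good1 l) Dom1 (fun p => omega L (r1 p) (rm p) (rL p) k *
      frob2 (rm p k *m act sigma (rc p k.-1) + bcast N (rb p k) - rc p k))).
- case: (eqVneq l 1%N) => h1.
    have [B hB] := homB 1%N (leqnn 1).
    apply: (gl_scale hB).
    apply: (@gl_ext _ _ _ _ (good1 l) Dom1 (fun p x => frob2 ((r1 p *m X + bcast N (rb p 1%N)) - x))).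
      by move=> p x _; rewrite -h1 upd_eq.
    exact: gl_quad.
  apply: (@gl_ext _ _ _ _ (good1 l) Dom1 (fun p x => omega L (r1 p) (rm p) (rL p) 1 *
      frob2 (r1 p *m X + bcast N (rb p 1%N) - rc p 1%N))).
    by move=> p x _; rewrite upd_ne // eq_sym.
  exact: gl_cst.
Qed.

End Main.

Unset Implicit Arguments. Set Strict Implicit.

Theorem lemma3p3 (R : realType) (L d M J N : nat)
  (X : 'M[R]_(d, N)) (A : 'M[R]_(J, N))
  (sigma : R -> R) (M0 M1 M2 Rad : R) :
  (2 <= L)%N -> (2 <= J)%N -> onehot_cols A ->
  (forall x, derivable sigma x 1) ->
  (forall x, derivable (derive1 sigma) x 1) ->
  continuous (derive1n 2 sigma) ->
  0 < M0 -> 0 < M1 -> 0 < M2 ->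
  (forall x, `|sigma x| <= M0) ->
  (forall x, `|derive1 sigma x| <= M1) ->
  (forall x, `|derive1n 2 sigma x| <= M2) ->
  0 < Rad ->
  exists C : nat -> R,
    (forall l, (1 <= l <= L)%N -> 0 < C l) /\
    (* (i) gradient in c_l, other parameters fixed with norm <= Rad *)
    (forall (l : nat) (W1 : 'M[R]_(M, d)) (Wm : nat -> 'M[R]_(M, M))
            (WL : 'M[R]_(J, M)) (b : nat -> 'cV[R]_M) (c : nat -> 'M[R]_(M, N)),
       (1 <= l <= L.-1)%N ->
       frob W1 <= Rad ->
       (forall k, (2 <= k <= L.-1)%N -> frob (Wm k) <= Rad) ->
       frob WL <= Rad ->
       (forall k, (1 <= k <= L.-1)%N -> frob (b k) <= Rad) ->
       (forall k, (1 <= k <= L.-1)%N -> k != l -> frob (c k) <= Rad) ->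
       forall ch ct : 'M[R]_(M, N),
         frob (mgrad (fun x => Sobj sigma L X A W1 Wm WL b (upd c l x)) ch
               - mgrad (fun x => Sobj sigma L X A W1 Wm WL b (upd c l x)) ct)
         <= C l * frob (ch - ct)) /\
    (* (ii) gradient in W_L, other parameters fixed with norm <= Rad *)
    (forall (W1 : 'M[R]_(M, d)) (Wm : nat -> 'M[R]_(M, M))
            (b : nat -> 'cV[R]_M) (c : nat -> 'M[R]_(M, N)),
       frob W1 <= Rad ->
       (forall k, (2 <= k <= L.-1)%N -> frob (Wm k) <= Rad) ->
       (forall k, (1 <= k <= L.-1)%N -> frob (b k) <= Rad) ->
       (forall k, (1 <= k <= L.-1)%N -> frob (c k) <= Rad) ->
       forall Wh Wt : 'M[R]_(J, M),
         frob Wh <= Rad -> frob Wt <= Rad ->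
         frob (mgrad (fun x => Sobj sigma L X A W1 Wm x b c) Wh
               - mgrad (fun x => Sobj sigma L X A W1 Wm x b c) Wt)
         <= C L * frob (Wh - Wt)).
Proof.
move=> L2 J2 oh d1 d2 _ _ _ _ b0 b1 b2 Rad0.
have P1 l : exists K : R, 0 < K /\ ((1 <= l <= L.-1)%N ->
    forall (W1 : 'M[R]_(M, d)) (Wm : nat -> 'M[R]_(M, M))
            (WL : 'M[R]_(J, M)) (b : nat -> 'cV[R]_M) (c : nat -> 'M[R]_(M, N)),
       frob W1 <= Rad ->
       (forall k, (2 <= k <= L.-1)%N -> frob (Wm k) <= Rad) ->
       frob WL <= Rad ->
       (forall k, (1 <= k <= L.-1)%N -> frob (b k) <= Rad) ->
       (forall k, (1 <= k <= L.-1)%N -> k != l -> frob (c k) <= Rad) ->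
       forall ch ct : 'M[R]_(M, N),
         frob (mgrad (fun x => Sobj sigma L X A W1 Wm WL b (upd c l x)) ch
               - mgrad (fun x => Sobj sigma L X A W1 Wm WL b (upd c l x)) ct)
         <= K * frob (ch - ct)).
  case: (boolP (1 <= l <= L.-1)%N) => hl; last by exists 1; split => //; rewrite hl.
  have [K [K0 hK]] := gl_mgrad (part1 M X A Rad L2 J2 d1 d2 b0 b1 b2 hl).
  exists K; split => // _ W1 Wm WL b c h1 h2 h3 h4 h5 ch ct.
  exact: (hK (Par1 W1 Wm WL b c) ch ct (conj h1 (conj h2 (conj h3 (conj h4 h5)))) I I).
have [f hf] := choice P1.
have [C2 [C20 hC2]] := gl_mgrad (nice_gl (part2 M X A Rad L2 J2 b0).1).
exists (fun l => if l == L then C2 else f l); split.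
  by move=> l _; case: ifP => _ //; case: (hf l).
split.
  move=> l W1 Wm WL b c hl; have lL : l != L by move: hl L2; lia.
  rewrite (negbTE lL); exact: (hf l).2 hl W1 Wm WL b c.
move=> W1 Wm b c h1 h2 h3 h4 Wh Wt hh ht; rewrite eqxx.
exact: (hC2 (Par2 W1 Wm b c) Wh Wt (conj h1 (conj h2 (conj h3 h4))) hh ht).
Qed.
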